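(* Let $\mathbb{H}$ be a real Hilbert space, $\epsilon\in[0,1)$, $T\in\mathbb{K}(\mathbb{H})$ and $A\in\mathbb{B}(\mathbb{H})$ with $M_T\subseteq M_A$. Then $T\perp_B^{\epsilon}A$ if and only if there exists $x\in M_T$ such that $Tx\perp^{\epsilon}Ax$.
   Context: $\mathbb{K}(\mathbb{H})$ and $\mathbb{B}(\mathbb{H})$ denote the compact and the bounded linear operators on $\mathbb{H}$, with the operator norm. $M_T=\{x\in\mathbb{H}:\|x\|=1,\ \|Tx\|=\|T\|\}$. For $\epsilon\in[0,1)$ and $u,v$ in a normed space, $u\perp_B^{\epsilon}v$ means $\|u+\lambda v\|^2\ge\|u\|^2-2\epsilon\|u\|\|\lambda v\|$ for all $\lambda\in\mathbb{R}$. In an inner product space, $x\perp^{\epsilon}y$ means $|\langle x,y\rangle|\le\epsilon\|x\|\|y\|$. *)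

(* Defs.v *)
From Stdlib Require Import Reals Lra ClassicalEpsilon.
Open Scope R_scope.

Record RealInnerProductSpace := {
  carrier :> Type;
  vzero : carrier;
  vadd : carrier -> carrier -> carrier;
  vopp : carrier -> carrier;
  vscal : R -> carrier -> carrier;
  inner : carrier -> carrier -> R;
  vadd_assoc : forall x y z, vadd x (vadd y z) = vadd (vadd x y) z;
  vadd_comm : forall x y, vadd x y = vadd y x;
  vadd_0 : forall x, vadd x vzero = x;
  vadd_opp : forall x, vadd x (vopp x) = vzero;
  vscal_1 : forall x, vscal 1 x = x;
  vscal_assoc : forall a b x, vscal a (vscal b x) = vscal (a * b) x;
  vscal_distr_v : forall a x y, vscal a (vadd x y) = vadd (vscal a x) (vscal a y);
  vscal_distr_s : forall a b x, vscal (a + b) x = vadd (vscal a x) (vscal b x);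
  inner_sym : forall x y, inner x y = inner y x;
  inner_add_l : forall x y z, inner (vadd x y) z = inner x z + inner y z;
  inner_scal_l : forall a x y, inner (vscal a x) y = a * inner x y;
  inner_pos : forall x, 0 <= inner x x;
  inner_def : forall x, inner x x = 0 -> x = vzero
}.

Arguments vzero {_}. Arguments vadd {_}. Arguments vopp {_}. Arguments vscal {_}. Arguments inner {_}.
Definition vnorm {V : RealInnerProductSpace} (x : V) : R := sqrt (inner x x).
Definition vsub {V : RealInnerProductSpace} (x y : V) : V := vadd x (vopp y).

Definition seq_converges {V : RealInnerProductSpace} (u : nat -> V) (l : V) : Prop :=
  forall eps, 0 < eps -> exists N, forall n, (N <= n)%nat -> vnorm (vsub (u n) l) < eps.

Definition seq_cauchy {V : RealInnerProductSpace} (u : nat -> V) : Prop :=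
  forall eps, 0 < eps -> exists N, forall n m, (N <= n)%nat -> (N <= m)%nat ->
    vnorm (vsub (u n) (u m)) < eps.

Definition is_complete (V : RealInnerProductSpace) : Prop :=
  forall u : nat -> V, seq_cauchy u -> exists l, seq_converges u l.

Definition is_linear {V : RealInnerProductSpace} (T : V -> V) : Prop :=
  (forall x y, T (vadd x y) = vadd (T x) (T y)) /\
  (forall a x, T (vscal a x) = vscal a (T x)).

Definition is_bounded_op {V : RealInnerProductSpace} (T : V -> V) : Prop :=
  is_linear T /\ exists c, forall x, vnorm (T x) <= c * vnorm x.

Definition is_compact_op {V : RealInnerProductSpace} (T : V -> V) : Prop :=
  is_bounded_op T /\
  forall u : nat -> V, (exists M, forall n, vnorm (u n) <= M) ->
    exists (phi : nat -> nat) (l : V),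
      (forall n, (phi n < phi (S n))%nat) /\ seq_converges (fun n => T (u (phi n))) l.

Definition opnorm {V : RealInnerProductSpace} (T : V -> V) : R :=
  epsilon (inhabits 0)
    (fun c => is_lub (fun r => exists x : V, vnorm x <= 1 /\ r = vnorm (T x)) c).

Definition norm_attaining_set {V : RealInnerProductSpace} (T : V -> V) (x : V) : Prop :=
  vnorm x = 1 /\ vnorm (T x) = opnorm T.

Definition op_add_scal {V : RealInnerProductSpace} (T A : V -> V) (l : R) : V -> V :=
  fun x => vadd (T x) (vscal l (A x)).

Definition BJ_eps_orth_op {V : RealInnerProductSpace} (eps : R) (T A : V -> V) : Prop :=
  forall l : R,
    (opnorm (op_add_scal T A l)) ^ 2 >=
      (opnorm T) ^ 2 - 2 * eps * opnorm T * opnorm (fun x => vscal l (A x)).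

Definition ip_eps_orth {V : RealInnerProductSpace} (eps : R) (x y : V) : Prop :=
  Rabs (inner x y) <= eps * vnorm x * vnorm y.

(* Main.v *)
Require Import Defs.
From Stdlib Require Import Reals Lra Lia Psatz ClassicalEpsilon Classical.
Open Scope R_scope.

Lemma vadd_cancel {V : RealInnerProductSpace} (u v : V) : vadd u v = u -> v = vzero.
Proof.
  intro H.
  assert (E : v = vadd v (vadd u (vopp u))) by (rewrite vadd_opp, vadd_0; auto).
  rewrite E, (vadd_assoc V), (vadd_comm V v u), H. apply vadd_opp.
Qed.

Lemma vopp_unique {V : RealInnerProductSpace} (u v : V) : vadd u v = vzero -> v = vopp u.
Proof.
  intro H.
  assert (E : v = vadd v (vadd u (vopp u))) by (rewrite vadd_opp, vadd_0; auto).
  rewrite E, (vadd_assoc V), (vadd_comm V v u), H. rewrite vadd_comm. apply vadd_0.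
Qed.

Lemma lin_zero {V : RealInnerProductSpace} (T : V -> V) : is_linear T -> T vzero = vzero.
Proof.
  intros [Ha _]. apply (vadd_cancel (T vzero)).
  rewrite <- Ha, vadd_0. reflexivity.
Qed.

Lemma lin_opp {V : RealInnerProductSpace} (T : V -> V) x : is_linear T -> T (vopp x) = vopp (T x).
Proof.
  intros HT. apply vopp_unique. destruct HT as [Ha Hs].
  rewrite <- Ha, vadd_opp. apply lin_zero. split; auto.
Qed.

Lemma inner_add_r {V : RealInnerProductSpace} (x y z : V) : inner x (vadd y z) = inner x y + inner x z.
Proof. rewrite inner_sym, inner_add_l, (inner_sym V y), (inner_sym V z). reflexivity. Qed.

Lemma inner_scal_r {V : RealInnerProductSpace} a (x y : V) : inner x (vscal a y) = a * inner x y.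
Proof. rewrite inner_sym, inner_scal_l, inner_sym. reflexivity. Qed.

Lemma inner_zero_l {V : RealInnerProductSpace} (y : V) : inner vzero y = 0.
Proof.
  assert (H := inner_add_l V vzero vzero y). rewrite vadd_0 in H. lra.
Qed.

Lemma inner_zero_r {V : RealInnerProductSpace} (y : V) : inner y vzero = 0.
Proof. rewrite inner_sym. apply inner_zero_l. Qed.

Lemma inner_opp_l {V : RealInnerProductSpace} (x y : V) : inner (vopp x) y = - inner x y.
Proof.
  assert (H := inner_add_l V x (vopp x) y). rewrite vadd_opp, inner_zero_l in H. lra.
Qed.

Lemma inner_opp_r {V : RealInnerProductSpace} (x y : V) : inner x (vopp y) = - inner x y.
Proof. rewrite inner_sym, inner_opp_l, inner_sym. reflexivity. Qed.

Lemma inner_sub_l {V : RealInnerProductSpace} (x y z : V) : inner (vsub x y) z = inner x z - inner y z.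
Proof. unfold vsub. rewrite inner_add_l, inner_opp_l. ring. Qed.

Lemma inner_sub_r {V : RealInnerProductSpace} (x y z : V) : inner z (vsub x y) = inner z x - inner z y.
Proof. unfold vsub. rewrite inner_add_r, inner_opp_r. ring. Qed.

Lemma Rabs_le_inv' (a b : R) : Rabs a <= b -> - b <= a <= b.
Proof. intro H. unfold Rabs in H. destruct (Rcase_abs a); split; lra. Qed.

Lemma vnorm_nonneg {V : RealInnerProductSpace} (x : V) : 0 <= vnorm x.
Proof. apply sqrt_pos. Qed.

Lemma vnorm_sq {V : RealInnerProductSpace} (x : V) : vnorm x ^ 2 = inner x x.
Proof. unfold vnorm. simpl. rewrite Rmult_1_r. apply sqrt_sqrt, inner_pos. Qed.

Lemma sq_le_le (a b : R) : 0 <= b -> a ^ 2 <= b ^ 2 -> a <= b.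
Proof. intros Hb H. destruct (Rle_lt_dec a b); auto. nra. Qed.

Lemma CS {V : RealInnerProductSpace} (x y : V) : Rabs (inner x y) <= vnorm x * vnorm y.
Proof.
  apply sq_le_le.
  - apply Rmult_le_pos; apply vnorm_nonneg.
  - rewrite Rpow_mult_distr, !vnorm_sq.
    assert (Hq : forall t, 0 <= inner x x + 2 * t * inner x y + t * t * inner y y).
    { intro t. assert (H := inner_pos V (vadd x (vscal t y))).
      rewrite inner_add_l, !inner_add_r, !inner_scal_l, !inner_scal_r in H.
      rewrite (inner_sym V y x) in H. nra. }
    assert (Hy := inner_pos V y).
    destruct (Req_dec (inner y y) 0) as [E|E].
    + apply inner_def in E. subst y. rewrite !inner_zero_r, Rabs_R0. generalize (inner_pos V x). nra.
    + specialize (Hq (- inner x y / inner y y)).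
      rewrite pow2_abs.
      assert (Hp : 0 < inner y y) by lra.
      replace (inner x x + 2 * (- inner x y / inner y y) * inner x y +
         - inner x y / inner y y * (- inner x y / inner y y) * inner y y)
        with ((inner x x * inner y y - inner x y ^ 2) / inner y y) in Hq by (field; lra).
      apply Rmult_le_compat_r with (r := inner y y) in Hq; [|lra].
      unfold Rdiv in Hq. rewrite Rmult_assoc, Rinv_l, Rmult_1_r, Rmult_0_l in Hq by lra.
      nra.
Qed.

Lemma vnorm_triangle {V : RealInnerProductSpace} (x y : V) : vnorm (vadd x y) <= vnorm x + vnorm y.
Proof.
  apply sq_le_le.
  - generalize (vnorm_nonneg x) (vnorm_nonneg y); lra.
  - rewrite vnorm_sq, inner_add_l, !inner_add_r, (inner_sym V y x).
    assert (H := CS x y). apply Rabs_le_inv' in H.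
    rewrite <- (vnorm_sq x), <- (vnorm_sq y). nra.
Qed.

Lemma vnorm_scal {V : RealInnerProductSpace} a (x : V) : vnorm (vscal a x) = Rabs a * vnorm x.
Proof.
  unfold vnorm. rewrite inner_scal_l, inner_scal_r, <- Rmult_assoc.
  rewrite sqrt_mult_alt. 2: nra.
  f_equal. exact (sqrt_Rsqr_abs a).
Qed.

Lemma vnorm_opp {V : RealInnerProductSpace} (x : V) : vnorm (vopp x) = vnorm x.
Proof. unfold vnorm. rewrite inner_opp_l, inner_opp_r. f_equal; ring. Qed.

Lemma vnorm_eq0 {V : RealInnerProductSpace} (x : V) : vnorm x = 0 -> x = vzero.
Proof. intro H. apply inner_def. rewrite <- vnorm_sq, H. ring. Qed.

Lemma vsub_sym_norm {V : RealInnerProductSpace} (x y : V) : vnorm (vsub x y) = vnorm (vsub y x).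
Proof. unfold vnorm. f_equal. rewrite !inner_sub_l, !inner_sub_r, (inner_sym V x y). ring. Qed.

Lemma vnorm_sub_tri {V : RealInnerProductSpace} (x y z : V) :
  vnorm (vsub x z) <= vnorm (vsub x y) + vnorm (vsub y z).
Proof.
  apply sq_le_le.
  - generalize (vnorm_nonneg (vsub x y)) (vnorm_nonneg (vsub y z)); lra.
  - assert (E : inner (vsub x z) (vsub x z) = inner (vadd (vsub x y) (vsub y z)) (vadd (vsub x y) (vsub y z))).
    { repeat first [rewrite inner_add_l | rewrite inner_add_r | rewrite inner_sub_l | rewrite inner_sub_r].
      rewrite (inner_sym V x y), (inner_sym V x z), (inner_sym V y z). ring. }
    rewrite vnorm_sq, E, <- vnorm_sq. 
    assert (H := vnorm_triangle (vsub x y) (vsub y z)).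
    generalize (vnorm_nonneg (vadd (vsub x y) (vsub y z))). nra.
Qed.
Lemma vopp_vopp {V : RealInnerProductSpace} (u : V) : vopp (vopp u) = u.
Proof. symmetry. apply vopp_unique. rewrite vadd_comm. apply vadd_opp. Qed.

Lemma vec_ext {V : RealInnerProductSpace} (u v : V) : (forall w, inner u w = inner v w) -> u = v.
Proof.
  intro H. assert (E : vsub u v = vzero).
  { apply inner_def. rewrite inner_sub_l, !H. ring. }
  unfold vsub in E. apply vopp_unique in E. rewrite <- (vopp_vopp u), <- E, vopp_vopp. reflexivity.
Qed.

Ltac iexp := repeat first [rewrite inner_add_l | rewrite inner_scal_l | rewrite inner_opp_l
  | rewrite inner_sub_l | rewrite inner_add_r | rewrite inner_scal_r | rewrite inner_opp_r
  | rewrite inner_sub_r | rewrite inner_zero_l | rewrite inner_zero_r].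

Lemma vnorm_zero {V : RealInnerProductSpace} : vnorm (@vzero V) = 0.
Proof. unfold vnorm. rewrite inner_zero_l. apply sqrt_0. Qed.

Lemma lin_comb {V : RealInnerProductSpace} (T : V -> V) a b x y : is_linear T ->
  T (vadd (vscal a x) (vscal b y)) = vadd (vscal a (T x)) (vscal b (T y)).
Proof. intros [Ha Hs]. rewrite Ha, !Hs. reflexivity. Qed.

Lemma lin_sub {V : RealInnerProductSpace} (T : V -> V) x y : is_linear T ->
  T (vsub x y) = vsub (T x) (T y).
Proof. intros HT. unfold vsub. rewrite (proj1 HT), lin_opp; auto. Qed.

Definition opset {V : RealInnerProductSpace} (S : V -> V) :=
  fun r => exists x : V, vnorm x <= 1 /\ r = vnorm (S x).

Lemma opnorm_lub {V : RealInnerProductSpace} (S : V -> V) : is_bounded_op S -> is_lub (opset S) (opnorm S).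
Proof.
  intros [_ [c Hc]]. unfold opnorm. apply epsilon_spec.
  destruct (completeness (opset S)) as [m Hm].
  - exists (Rabs c). intros r [x [Hx ->]]. specialize (Hc x).
    generalize (vnorm_nonneg x) (Rle_abs c) (Rabs_pos c). nra.
  - exists (vnorm (S vzero)). exists vzero. split; auto. rewrite vnorm_zero; lra.
  - exists m; exact Hm.
Qed.

Lemma opnorm_ge {V : RealInnerProductSpace} (S : V -> V) x : is_bounded_op S -> vnorm x <= 1 -> vnorm (S x) <= opnorm S.
Proof. intros HS Hx. apply (proj1 (opnorm_lub S HS)). exists x; auto. Qed.

Lemma opnorm_le {V : RealInnerProductSpace} (S : V -> V) c : is_bounded_op S ->
  (forall x, vnorm x <= 1 -> vnorm (S x) <= c) -> opnorm S <= c.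
Proof. intros HS H. apply (proj2 (opnorm_lub S HS)). intros r [x [Hx ->]]. auto. Qed.

Lemma opnorm_nonneg {V : RealInnerProductSpace} (S : V -> V) : is_bounded_op S -> 0 <= opnorm S.
Proof.
  intros HS. eapply Rle_trans; [apply (vnorm_nonneg (S vzero))|]. apply opnorm_ge; auto.
  rewrite vnorm_zero; lra.
Qed.

Lemma opnorm_bound {V : RealInnerProductSpace} (S : V -> V) x : is_bounded_op S -> vnorm (S x) <= opnorm S * vnorm x.
Proof.
  intros HS. destruct (Req_dec (vnorm x) 0) as [E|E].
  - apply vnorm_eq0 in E. subst x. rewrite (lin_zero S (proj1 HS)), vnorm_zero. lra.
  - assert (Hn := vnorm_nonneg x).
    assert (H := opnorm_ge S (vscal (/ vnorm x) x) HS).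
    rewrite (proj2 (proj1 HS)), !vnorm_scal, Rabs_right in H.
    2: { apply Rle_ge. left. apply Rinv_0_lt_compat. lra. }
    rewrite Rinv_l in H by auto.
    specialize (H (Rle_refl _)).
    apply Rmult_le_compat_r with (r := vnorm x) in H; auto.
    rewrite Rmult_comm, <- Rmult_assoc, Rinv_r, Rmult_1_l in H; auto.
Qed.

Lemma opnorm_approx {V : RealInnerProductSpace} (S : V -> V) d : is_bounded_op S -> 0 < d ->
  exists x, vnorm x <= 1 /\ opnorm S - d < vnorm (S x).
Proof.
  intros HS Hd. apply NNPP. intro N.
  assert (opnorm S <= opnorm S - d); [|lra].
  apply opnorm_le; auto. intros x Hx.
  destruct (Rle_lt_dec (vnorm (S x)) (opnorm S - d)); auto.
  exfalso. apply N. exists x. auto.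
Qed.

Lemma bounded_comb {V : RealInnerProductSpace} (T A : V -> V) l : is_bounded_op T -> is_bounded_op A ->
  is_bounded_op (op_add_scal T A l).
Proof.
  intros [[Ta Ts] [c Hc]] [[Aa As] [d Hd]]. unfold op_add_scal. split; [split|].
  - intros x y. apply vec_ext. intro w. rewrite Ta, Aa. iexp. ring.
  - intros a x. apply vec_ext. intro w. rewrite Ts, As. iexp. ring.
  - exists (Rabs c + Rabs l * Rabs d). intro x.
    eapply Rle_trans; [apply vnorm_triangle|]. rewrite vnorm_scal.
    specialize (Hc x); specialize (Hd x).
    assert (c * vnorm x <= Rabs c * vnorm x) by (apply Rmult_le_compat_r; [apply vnorm_nonneg|apply Rle_abs]).
    assert (d * vnorm x <= Rabs d * vnorm x) by (apply Rmult_le_compat_r; [apply vnorm_nonneg|apply Rle_abs]).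
    assert (Rabs l * vnorm (A x) <= Rabs l * (Rabs d * vnorm x)) by (apply Rmult_le_compat_l; [apply Rabs_pos|lra]).
    lra.
Qed.

Lemma bounded_scal {V : RealInnerProductSpace} (A : V -> V) l : is_bounded_op A ->
  is_bounded_op (fun x => vscal l (A x)).
Proof.
  intros [[Aa As] [d Hd]]. split; [split|].
  - intros x y. apply vec_ext. intro w. rewrite Aa. iexp. ring.
  - intros a x. apply vec_ext. intro w. rewrite As. iexp. ring.
  - exists (Rabs l * Rabs d). intro x. rewrite vnorm_scal.
    specialize (Hd x).
    assert (d * vnorm x <= Rabs d * vnorm x) by (apply Rmult_le_compat_r; [apply vnorm_nonneg|apply Rle_abs]).
    assert (Rabs l * vnorm (A x) <= Rabs l * (Rabs d * vnorm x)) by (apply Rmult_le_compat_l; [apply Rabs_pos|lra]).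
    lra.
Qed.

Lemma opnorm_scal_le {V : RealInnerProductSpace} (A : V -> V) l : is_bounded_op A ->
  opnorm (fun x => vscal l (A x)) <= Rabs l * opnorm A.
Proof.
  intros HA. apply opnorm_le. apply bounded_scal; auto.
  intros x Hx. rewrite vnorm_scal. apply Rmult_le_compat_l. apply Rabs_pos. apply opnorm_ge; auto.
Qed.

Lemma opnorm_scal_ge {V : RealInnerProductSpace} (A : V -> V) l x : is_bounded_op A -> vnorm x <= 1 ->
  Rabs l * vnorm (A x) <= opnorm (fun x => vscal l (A x)).
Proof.
  intros HA Hx. rewrite <- vnorm_scal. apply (opnorm_ge (fun x => vscal l (A x))); auto.
  apply bounded_scal; auto.
Qed.
Lemma dir_back {V : RealInnerProductSpace} (eps : R) (T A : V -> V) x :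
  0 <= eps -> is_bounded_op T -> is_bounded_op A -> norm_attaining_set T x ->
  vnorm (A x) = opnorm A -> ip_eps_orth eps (T x) (A x) -> BJ_eps_orth_op eps T A.
Proof.
  intros He HT HA [Hx HTx] HAx Ho l. unfold ip_eps_orth in Ho.
  rewrite HTx, HAx in Ho. apply Rabs_le_inv' in Ho.
  assert (HS := opnorm_ge (op_add_scal T A l) x (bounded_comb T A l HT HA) (Req_le _ _ Hx)).
  assert (Hsc := opnorm_scal_ge A l x HA (Req_le _ _ Hx)). rewrite HAx in Hsc.
  assert (E : vnorm (op_add_scal T A l x) ^ 2 = vnorm (T x) ^ 2 + 2 * l * inner (T x) (A x) + l ^ 2 * vnorm (A x) ^ 2).
  { rewrite !vnorm_sq. unfold op_add_scal. iexp. rewrite (inner_sym V (A x) (T x)). ring. }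
  rewrite HTx, HAx in E.
  assert (K0 := opnorm_nonneg T HT). assert (a0 := opnorm_nonneg A HA).
  assert (Hn := vnorm_nonneg (op_add_scal T A l x)).
  set (K := opnorm T) in *. set (a := opnorm A) in *.
  set (s := vnorm (op_add_scal T A l x)) in *.
  set (o := opnorm (op_add_scal T A l)) in *.
  set (q := opnorm (fun x0 : V => vscal l (A x0))) in *.
  set (p := inner (T x) (A x)) in *.
  assert (L : - (Rabs l * (eps * K * a)) <= l * p).
  { unfold Rabs. destruct (Rcase_abs l); nra. }
  assert (eps * K * (Rabs l * a) <= eps * K * q) by (apply Rmult_le_compat_l; nra).
  apply Rle_ge. assert (s ^ 2 <= o ^ 2) by nra. nra.
Qed.
Lemma small_r (c rho : R) : 0 < rho -> exists N : nat, forall n, (N <= n)%nat -> c / INR (S n) < rho.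
Proof.
  intros Hr. destruct (INR_archimed rho c) as [N HN]; [lra|].
  exists N. intros n Hn.
  assert (HS : 0 < INR (S n)) by (apply lt_0_INR; lia).
  assert (INR N <= INR (S n)) by (apply le_INR; lia).
  apply (Rmult_lt_reg_r (INR (S n))); auto.
  unfold Rdiv. rewrite Rmult_assoc, Rinv_l by lra. nra.
Qed.

Lemma phi_ge (phi : nat -> nat) : (forall n, (phi n < phi (S n))%nat) -> forall n, (n <= phi n)%nat.
Proof. intros H n. induction n; [lia|]. specialize (H n). lia. Qed.

Lemma vnorm_sub0 {V : RealInnerProductSpace} (x : V) : vnorm (vsub x vzero) = vnorm x.
Proof. unfold vnorm. f_equal. iexp. ring. Qed.

Lemma sqnorm_lt (a b : R) : 0 <= b -> a ^ 2 < b ^ 2 -> a < b.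
Proof. intros Hb H. destruct (Rlt_le_dec a b); auto. nra. Qed.

Lemma attain {V : RealInnerProductSpace} (Hcomplete : is_complete V) (T : V -> V) (u : nat -> V) (c : R) :
  is_compact_op T -> 0 < opnorm T -> 0 <= c -> (forall n, vnorm (u n) <= 1) ->
  (forall n, opnorm T - vnorm (T (u n)) <= c / INR (S n)) ->
  exists (phi : nat -> nat) (x : V), (forall n, (phi n < phi (S n))%nat) /\
     seq_converges (fun n => u (phi n)) x /\ vnorm x = 1 /\ vnorm (T x) = opnorm T.
Proof.
  intros [HTb HTc] HK Hc Hu Hr.
  set (K := opnorm T) in *.
  destruct (HTc u) as [phi [l [Hphi Hconv]]]. { exists 1. auto. }
  assert (Hge := phi_ge phi Hphi).
  set (v := fun n => u (phi n)).
  assert (Hv : forall n, vnorm (v n) <= 1) by (intro; apply Hu).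
  assert (HTv : forall n, K ^ 2 - 2 * K * (c / INR (S (phi n))) <= vnorm (T (v n)) ^ 2).
  { intro n. specialize (Hr (phi n)). fold K in Hr. unfold v.
    assert (0 <= vnorm (T (u (phi n)))) by apply vnorm_nonneg.
    destruct (Rle_lt_dec (c / INR (S (phi n))) K); nra. }
  assert (HTle : forall z, vnorm (T z) ^ 2 <= K ^ 2 * vnorm z ^ 2).
  { intro z. assert (H := opnorm_bound T z HTb). fold K in H.
    generalize (vnorm_nonneg (T z)). 
    assert (0 <= K * vnorm z) by (generalize (vnorm_nonneg z); nra). nra. }
  assert (Hcauchy : seq_cauchy v).
  { intros e He.
    destruct (Hconv (e * K / 4)) as [N1 HN1]. { assert (0 < e * K) by nra. lra. }
    destruct (small_r c (e ^ 2 * K / 16)) as [N2 HN2]. { assert (0 < e ^ 2 * K) by (apply Rmult_lt_0_compat; nra). lra. }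
    exists (Nat.max N1 N2). intros n m Hn Hm.
    assert (Rn := HN2 (phi n) ltac:(specialize (Hge n); lia)).
    assert (Rm := HN2 (phi m) ltac:(specialize (Hge m); lia)).
    assert (Cn : vnorm (vsub (T (v n)) l) < e * K / 4) by exact (HN1 n ltac:(lia)).
    assert (Cm : vnorm (vsub (T (v m)) l) < e * K / 4) by exact (HN1 m ltac:(lia)).
    assert (Tri := vnorm_sub_tri (T (v n)) l (T (v m))).
    rewrite (vsub_sym_norm l) in Tri.
    assert (Dnm : vnorm (vsub (T (v n)) (T (v m))) < e * K / 2) by lra.
    assert (P1 : vnorm (vsub (v n) (v m)) ^ 2 + vnorm (vadd (v n) (v m)) ^ 2 =
                 2 * vnorm (v n) ^ 2 + 2 * vnorm (v m) ^ 2).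
    { rewrite !vnorm_sq. iexp. rewrite (inner_sym V (v m) (v n)). ring. }
    assert (P2 : vnorm (vsub (T (v n)) (T (v m))) ^ 2 + vnorm (vadd (T (v n)) (T (v m))) ^ 2 =
                 2 * vnorm (T (v n)) ^ 2 + 2 * vnorm (T (v m)) ^ 2).
    { rewrite !vnorm_sq. iexp. rewrite (inner_sym V (T (v m)) (T (v n))). ring. }
    assert (E : T (vadd (v n) (v m)) = vadd (T (v n)) (T (v m))) by (apply (proj1 (proj1 HTb))).
    assert (H3 := HTle (vadd (v n) (v m))). rewrite E in H3.
    assert (HTn := HTv n). assert (HTm := HTv m).
    assert (D2 : vnorm (vsub (T (v n)) (T (v m))) ^ 2 <= (e * K / 2) ^ 2).
    { generalize (vnorm_nonneg (vsub (T (v n)) (T (v m)))). nra. }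
    assert (Vn := Hv n). assert (Vm := Hv m).
    assert (Vn2 : vnorm (v n) ^ 2 <= 1) by (generalize (vnorm_nonneg (v n)); nra).
    assert (Vm2 : vnorm (v m) ^ 2 <= 1) by (generalize (vnorm_nonneg (v m)); nra).
    set (a := vnorm (vsub (v n) (v m))) in *.
    set (b := vnorm (vadd (v n) (v m))) in *.
    set (rn := c / INR (S (phi n))) in *. set (rm := c / INR (S (phi m))) in *.
    assert (B : K ^ 2 * b ^ 2 >= 4 * K ^ 2 - 4 * K * (rn + rm) - (e * K / 2) ^ 2) by nra.
    assert (A2 : K ^ 2 * a ^ 2 <= 4 * K * (rn + rm) + (e * K / 2) ^ 2) by nra.
    assert (A3 : K ^ 2 * a ^ 2 < K ^ 2 * e ^ 2).
    { assert (4 * K * (rn + rm) < 4 * K * (2 * (e ^ 2 * K / 16))) by (apply Rmult_lt_compat_l; lra).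
      nra. }
    apply sqnorm_lt; [lra|]. apply (Rmult_lt_reg_l (K ^ 2)); [nra|]. lra. }
  destruct (Hcomplete v Hcauchy) as [x Hx].
  exists phi, x. split; [auto|]. split; [exact Hx|].
  assert (Hlim : forall d, 0 < d -> vnorm x <= 1 + d /\ K - d <= vnorm (T x)).
  { intros d Hd.
    destruct (Hx (d / (2 * (K + 1)))) as [N1 HN1]. { apply Rdiv_lt_0_compat; lra. }
    destruct (small_r c (d / 2)) as [N2 HN2]; [lra|].
    set (n := Nat.max N1 N2).
    assert (Rn := HN2 (phi n) ltac:(specialize (Hge n); lia)).
    assert (Cn : vnorm (vsub (v n) x) < d / (2 * (K + 1))) by exact (HN1 n ltac:(lia)).
    assert (Hrn := Hr (phi n)). fold K in Hrn. change (K - vnorm (T (v n)) <= c / INR (S (phi n))) in Hrn.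
    assert (dK : d / (2 * (K + 1)) * (K + 1) = d / 2) by (field; lra).
    split.
    - assert (Tri := vnorm_sub_tri x (v n) vzero). rewrite !vnorm_sub0 in Tri.
      assert (Vn := Hv n). rewrite vsub_sym_norm in Cn.
      assert (d / (2 * (K + 1)) <= d / 2).
      { apply Rmult_le_compat_l; [lra|]. apply Rinv_le_contravar; lra. }
      lra.
    - assert (Tri := vnorm_sub_tri (T (v n)) (T x) vzero). rewrite !vnorm_sub0 in Tri.
      rewrite <- (lin_sub T _ _ (proj1 HTb)) in Tri.
      assert (B := opnorm_bound T (vsub (v n) x) HTb). fold K in B.
      assert (K * vnorm (vsub (v n) x) <= K * (d / (2 * (K + 1)))) by (apply Rmult_le_compat_l; lra).
      assert (K * (d / (2 * (K + 1))) <= (K + 1) * (d / (2 * (K + 1)))).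
      { apply Rmult_le_compat_r; [|lra]. left. apply Rdiv_lt_0_compat; lra. }
      lra. }
  assert (H1 : vnorm x <= 1).
  { apply Rle_plus_epsilon. intros d Hd. apply (proj1 (Hlim d Hd)). }
  assert (H2 : K <= vnorm (T x)).
  { apply Rle_plus_epsilon. intros d Hd. generalize (proj2 (Hlim d Hd)). lra. }
  assert (H3 := opnorm_bound T x HTb). fold K in H3.
  assert (H4 : 1 <= vnorm x).
  { apply (Rmult_le_reg_l K); auto. lra. }
  split; [lra|]. fold K. nra.
Qed.
Lemma cont_est {V : RealInnerProductSpace} (T A : V -> V) x v :
  is_bounded_op T -> is_bounded_op A -> vnorm x <= 1 -> vnorm v <= 1 ->
  Rabs (inner (T x) (A x) - inner (T v) (A v)) <= 2 * opnorm T * opnorm A * vnorm (vsub x v).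
Proof.
  intros HT HA Hx Hv.
  assert (E : inner (T x) (A x) - inner (T v) (A v) =
     inner (T (vsub x v)) (A x) + inner (T v) (A (vsub x v))).
  { rewrite (lin_sub T _ _ (proj1 HT)), (lin_sub A _ _ (proj1 HA)). iexp. ring. }
  rewrite E. eapply Rle_trans; [apply Rabs_triang|].
  assert (C1 := CS (T (vsub x v)) (A x)). assert (C2 := CS (T v) (A (vsub x v))).
  assert (B1 := opnorm_bound T (vsub x v) HT). assert (B2 := opnorm_bound A x HA).
  assert (B3 := opnorm_bound T v HT). assert (B4 := opnorm_bound A (vsub x v) HA).
  assert (K0 := opnorm_nonneg T HT). assert (a0 := opnorm_nonneg A HA).
  generalize (vnorm_nonneg (vsub x v)) (vnorm_nonneg x) (vnorm_nonneg v)
    (vnorm_nonneg (T (vsub x v))) (vnorm_nonneg (A x)) (vnorm_nonneg (T v)) (vnorm_nonneg (A (vsub x v))).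
  intros. set (d := vnorm (vsub x v)) in *. set (K := opnorm T) in *. set (a := opnorm A) in *.
  assert (vnorm (T (vsub x v)) * vnorm (A x) <= (K * d) * (a * 1)).
  { apply Rmult_le_compat; try lra. nra. }
  assert (vnorm (T v) * vnorm (A (vsub x v)) <= (K * 1) * (a * d)).
  { apply Rmult_le_compat; try lra. nra. }
  lra.
Qed.

Lemma onesided {V : RealInnerProductSpace} (Hcomplete : is_complete V) (eps s : R) (T A : V -> V) :
  is_compact_op T -> is_bounded_op A -> 0 <= eps -> 0 < opnorm T -> (s = 1 \/ s = -1) ->
  BJ_eps_orth_op eps T A ->
  exists x, vnorm x = 1 /\ vnorm (T x) = opnorm T /\ s * inner (T x) (A x) <= eps * opnorm T * opnorm A.
Proof.
  intros HTc HA He HK Hs HBJ.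
  assert (HT := proj1 HTc).
  assert (K0 := opnorm_nonneg T HT). assert (a0 := opnorm_nonneg A HA).
  set (K := opnorm T) in *. set (a := opnorm A) in *.
  set (tt := fun n : nat => / INR (S n)).
  assert (Ht : forall n, 0 < tt n <= 1).
  { intro n. unfold tt. assert (1 <= INR (S n)) by (rewrite S_INR; generalize (pos_INR n); lra).
    split. apply Rinv_0_lt_compat; lra. rewrite <- Rinv_1. apply Rinv_le_contravar; lra. }
  set (P := fun n x => vnorm x <= 1 /\ opnorm (op_add_scal T A (- s * tt n)) - tt n ^ 2 <
                        vnorm (op_add_scal T A (- s * tt n) x)).
  set (u := fun n => epsilon (inhabits vzero) (P n)).
  assert (Hu : forall n, P n (u n)).
  { intro n. apply epsilon_spec. apply opnorm_approx. apply bounded_comb; auto.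
    specialize (Ht n). nra. }
  set (C := 2 * eps * K * a + 2 * (K + a) + 2 * K * a + a ^ 2).
  assert (Hs2 : s * s = 1) by (destruct Hs; subst; ring).
  assert (Rabs (- s * 1) = 1) as Habs1 by (destruct Hs; subst; unfold Rabs; destruct Rcase_abs; lra).
  assert (Key : forall n, s * inner (T (u n)) (A (u n)) <= eps * K * a + tt n * (K + a + a ^ 2 / 2) /\
                          K - vnorm (T (u n)) <= (C / K) * tt n).
  { intro n. destruct (Hu n) as [Hx Happ].
    set (t := tt n) in *. assert (Htn := Ht n). fold t in Htn.
    set (S := op_add_scal T A (- s * t)) in *. set (x := u n) in *.
    assert (HSb : is_bounded_op S) by (apply bounded_comb; auto).
    assert (Hb := HBJ (- s * t)). fold K S in Hb.
    assert (Hsc := opnorm_scal_le A (- s * t) HA). fold a in Hsc.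
    assert (Eabs : Rabs (- s * t) = t).
    { destruct Hs; subst; unfold Rabs; destruct Rcase_abs; lra. }
    rewrite Eabs in Hsc.
    set (q0 := opnorm (fun x0 : V => vscal (- s * t) (A x0))) in *.
    assert (Hq0 : eps * K * q0 <= eps * K * (t * a)) by (apply Rmult_le_compat_l; nra).
    set (o := opnorm S) in *.
    assert (o0 : 0 <= o) by (apply opnorm_nonneg; auto).
    assert (oup : o <= K + a).
    { apply opnorm_le; auto. intros z Hz. unfold S, op_add_scal.
      eapply Rle_trans; [apply vnorm_triangle|]. rewrite vnorm_scal, Eabs.
      assert (vnorm (T z) <= K) by (apply opnorm_ge; auto).
      assert (vnorm (A z) <= a) by (apply opnorm_ge; auto).
      generalize (vnorm_nonneg (A z)). nra. }
    set (y := vnorm (S x)) in *. assert (y0 : 0 <= y) by apply vnorm_nonneg.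
    assert (Hy2 : o ^ 2 - 2 * t ^ 2 * o <= y ^ 2).
    { destruct (Rle_lt_dec (t ^ 2) o); nra. }
    assert (E : y ^ 2 = vnorm (T x) ^ 2 - 2 * s * t * inner (T x) (A x) + t ^ 2 * vnorm (A x) ^ 2).
    { unfold y, S, op_add_scal. rewrite !vnorm_sq. iexp. rewrite (inner_sym V (A x) (T x)).
      destruct Hs as [Hs'|Hs']; rewrite Hs'; ring. }
    assert (BK : vnorm (T x) <= K) by (apply opnorm_ge; auto).
    assert (qa : vnorm (A x) <= a) by (apply opnorm_ge; auto).
    assert (B0 := vnorm_nonneg (T x)). assert (q0' := vnorm_nonneg (A x)).
    assert (Cp := CS (T x) (A x)). apply Rabs_le_inv' in Cp.
    set (B := vnorm (T x)) in *. set (q := vnorm (A x)) in *. set (p := inner (T x) (A x)) in *.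
    assert (Bq : B * q <= K * a) by (apply Rmult_le_compat; auto).
    assert (sp : - (K * a) <= s * p <= K * a) by (destruct Hs; subst; lra).
    assert (Main : B ^ 2 - 2 * t * (s * p) + t ^ 2 * q ^ 2 >= K ^ 2 - 2 * eps * K * (t * a) - 2 * t ^ 2 * (K + a)).
    { assert (2 * t ^ 2 * o <= 2 * t ^ 2 * (K + a)) by (apply Rmult_le_compat_l; nra).
      replace (B ^ 2 - 2 * t * (s * p) + t ^ 2 * q ^ 2) with (y ^ 2) by (rewrite E; ring). nra. }
    assert (q2 : t ^ 2 * q ^ 2 <= t ^ 2 * a ^ 2) by (apply Rmult_le_compat_l; nra).
    assert (B2 : B ^ 2 <= K ^ 2) by nra.
    split.
    - assert (2 * t * (s * p) <= 2 * t * (eps * K * a + t * (K + a + a ^ 2 / 2))) by nra.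
      apply (Rmult_le_reg_l (2 * t)); lra.
    - assert (L : K ^ 2 - B ^ 2 <= t * C).
      { unfold C. assert (t ^ 2 <= t) by nra.
        assert (2 * t * (s * p) >= - (2 * t * (K * a))) by nra.
        assert (t ^ 2 * (K + a) <= t * (K + a)) by nra.
        assert (t ^ 2 * a ^ 2 <= t * a ^ 2) by nra. nra. }
      apply (Rmult_le_reg_l K); auto.
      replace (K * (C / K * t)) with (t * C) by (field; lra).
      assert (K * (K - B) <= (K + B) * (K - B)) by (apply Rmult_le_compat_r; lra).
      nra. }
  assert (C0 : 0 <= C / K).
  { unfold Rdiv. apply Rmult_le_pos; [|left; apply Rinv_0_lt_compat; auto]. unfold C. assert (0 <= eps * K * a) by (apply Rmult_le_pos; nra). nra. }
  destruct (attain Hcomplete T u (C / K) HTc HK C0) as [phi [x [Hphi [Hconv [Hx1 HTx]]]]].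
  - intro n. apply (Hu n).
  - intro n. replace (C / K / INR (S n)) with (C / K * tt n) by (unfold tt; field; split; [lra|apply not_0_INR; lia]).
    apply (Key n).
  - exists x. split; auto. split; auto.
    apply Rle_plus_epsilon. intros d Hd.
    assert (Hge := phi_ge phi Hphi).
    destruct (Hconv (d / (2 * (2 * K * a + 1)))) as [N1 HN1].
    { apply Rdiv_lt_0_compat; [lra|]. nra. }
    destruct (small_r (K + a + a ^ 2 / 2) (d / 2)) as [N2 HN2]; [lra|].
    set (n := Nat.max N1 N2).
    assert (Cn : vnorm (vsub (u (phi n)) x) < d / (2 * (2 * K * a + 1))) by exact (HN1 n ltac:(lia)).
    assert (Rn := HN2 (phi n) ltac:(specialize (Hge n); lia)).
    destruct (Key (phi n)) as [K1 _].
    assert (Ce := cont_est T A x (u (phi n)) HT HA ltac:(lra) (proj1 (Hu (phi n)))).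
    rewrite vsub_sym_norm in Ce. fold K a in Ce. apply Rabs_le_inv' in Ce.
    set (p0 := inner (T x) (A x)) in *. set (p1 := inner (T (u (phi n))) (A (u (phi n)))) in *.
    set (w := vnorm (vsub (u (phi n)) x)) in *.
    assert (Hw : 2 * K * a * w <= d / 2).
    { assert (2 * K * a * w <= (2 * K * a + 1) * (d / (2 * (2 * K * a + 1)))).
      { apply Rmult_le_compat; try lra. nra. generalize (vnorm_nonneg (vsub (u (phi n)) x)). fold w. lra. }
      replace ((2 * K * a + 1) * (d / (2 * (2 * K * a + 1)))) with (d / 2) in H by (field; nra). lra. }
    assert (Etn : tt (phi n) * (K + a + a ^ 2 / 2) = (K + a + a ^ 2 / 2) / INR (S (phi n)))
      by (unfold tt; field; apply not_0_INR; lia).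
    assert (s * p0 <= s * p1 + Rabs (p0 - p1)).
    { destruct Hs; subst; unfold Rabs; destruct Rcase_abs; lra. }
    assert (Rabs (p0 - p1) <= d / 2) by (unfold Rabs; destruct Rcase_abs; lra).
    lra.
Qed.
Lemma subspace {V : RealInnerProductSpace} (T : V -> V) x y a b :
  is_bounded_op T ->
  vnorm (T x) ^ 2 = opnorm T ^ 2 * vnorm x ^ 2 -> vnorm (T y) ^ 2 = opnorm T ^ 2 * vnorm y ^ 2 ->
  vnorm (T (vadd (vscal a x) (vscal b y))) ^ 2 = opnorm T ^ 2 * vnorm (vadd (vscal a x) (vscal b y)) ^ 2.
Proof.
  intros HT Hx Hy.
  assert (Q : forall z, vnorm (T z) ^ 2 <= opnorm T ^ 2 * vnorm z ^ 2).
  { intro z. assert (H := opnorm_bound T z HT). generalize (vnorm_nonneg (T z)) (vnorm_nonneg z) (opnorm_nonneg T HT).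
    intros. assert (0 <= opnorm T * vnorm z) by nra. nra. }
  assert (Ex : forall c d, vnorm (T (vadd (vscal c x) (vscal d y))) ^ 2 - opnorm T ^ 2 * vnorm (vadd (vscal c x) (vscal d y)) ^ 2
     = c ^ 2 * (vnorm (T x) ^ 2 - opnorm T ^ 2 * vnorm x ^ 2) + d ^ 2 * (vnorm (T y) ^ 2 - opnorm T ^ 2 * vnorm y ^ 2)
       + 2 * c * d * (inner (T x) (T y) - opnorm T ^ 2 * inner x y)).
  { intros c d. rewrite (lin_comb T _ _ _ _ (proj1 HT)), !vnorm_sq. iexp.
    rewrite (inner_sym V (T y) (T x)), (inner_sym V y x). ring. }
  assert (E1 := Ex 1 1). assert (E2 := Ex 1 (-1)).
  assert (Q1 := Q (vadd (vscal 1 x) (vscal 1 y))). assert (Q2 := Q (vadd (vscal 1 x) (vscal (-1) y))).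
  assert (Bz : inner (T x) (T y) - opnorm T ^ 2 * inner x y = 0).
  { rewrite Hx, Hy in E1, E2. lra. }
  assert (E := Ex a b). rewrite Hx, Hy, Bz in E. lra.
Qed.
Lemma ivt_step {V : RealInnerProductSpace} (eps : R) (T A : V -> V) x y :
  0 <= eps -> is_bounded_op T -> is_bounded_op A ->
  (forall w, norm_attaining_set T w -> norm_attaining_set A w) ->
  norm_attaining_set T x -> norm_attaining_set T y ->
  inner (T x) (A x) < - (eps * opnorm T * opnorm A) ->
  eps * opnorm T * opnorm A < inner (T y) (A y) ->
  exists w, norm_attaining_set T w /\ ip_eps_orth eps (T w) (A w).
Proof.
  intros He HT HA HM Hx Hy Hpx Hpy.
  assert (K0 := opnorm_nonneg T HT). assert (a0 := opnorm_nonneg A HA).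
  set (K := opnorm T) in *. set (a := opnorm A) in *.
  assert (c0 : 0 <= eps * K * a) by (apply Rmult_le_pos; [apply Rmult_le_pos|]; auto).
  set (c := eps * K * a) in *.
  assert (ixx : inner x x = 1) by (rewrite <- vnorm_sq, (proj1 Hx); ring).
  assert (iyy : inner y y = 1) by (rewrite <- vnorm_sq, (proj1 Hy); ring).
  set (pxx := inner (T x) (A x)) in *. set (pyy := inner (T y) (A y)) in *.
  set (pxy := inner (T x) (A y)). set (pyx := inner (T y) (A x)). set (ixy := inner x y).
  set (g := fun s => (1 - s) ^ 2 * pxx + (1 - s) * s * (pxy + pyx) + s ^ 2 * pyy
                     + c * ((1 - s) ^ 2 + 2 * (1 - s) * s * ixy + s ^ 2)).
  assert (Hg : continuity g) by (unfold continuity, g; intro; reg).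
  destruct (IVT g 0 1 Hg ltac:(lra)) as [s0 [Hs0 Hgs0]].
  { unfold g. lra. } { unfold g. lra. }
  set (z := vadd (vscal (1 - s0) x) (vscal s0 y)).
  assert (HTz : T z = vadd (vscal (1 - s0) (T x)) (vscal s0 (T y))) by (apply lin_comb, (proj1 HT)).
  assert (HAz : A z = vadd (vscal (1 - s0) (A x)) (vscal s0 (A y))) by (apply lin_comb, (proj1 HA)).
  assert (Ef : inner (T z) (A z) + c * inner z z = g s0).
  { rewrite HTz, HAz. unfold z, g. iexp. fold pxx pyy pxy pyx. rewrite ixx, iyy, (inner_sym V y x). fold ixy. ring. }
  assert (Hz : 0 < inner z z).
  { destruct (inner_pos V z) as [|E]; auto. exfalso. symmetry in E. apply inner_def in E.
    assert (E1 : inner (T z) (A x) = 0) by (rewrite E, (lin_zero T (proj1 HT)); apply inner_zero_l).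
    assert (E2 : inner (T z) (A y) = 0) by (rewrite E, (lin_zero T (proj1 HT)); apply inner_zero_l).
    assert (E3 : inner (T x) (A z) = 0) by (rewrite E, (lin_zero A (proj1 HA)); apply inner_zero_r).
    assert (E5 : inner z x = 0) by (rewrite E; apply inner_zero_l).
    assert (E6 : inner z y = 0) by (rewrite E; apply inner_zero_l).
    rewrite HTz in E1, E2. rewrite HAz in E3. unfold z in E5, E6.
    revert E1 E2 E3 E5 E6. iexp. intros E1 E2 E3 E5 E6. fold pxx pyy pxy pyx in E1, E2, E3. rewrite ixx, (inner_sym V y x) in E5. rewrite iyy in E6. fold ixy in E5, E6.
    assert (Hm : (1 - 2 * s0) * (1 - ixy) = 0) by lra.
    apply Rmult_integral in Hm. destruct Hm as [Hm|Hm].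
    - assert (s0 = 1 / 2) by lra. subst s0. lra.
    - assert (ixy = 1) by lra. rewrite H in E5. lra. }
  set (nz := vnorm z).
  assert (Hnz : 0 < nz).
  { unfold nz, vnorm. apply sqrt_lt_R0. auto. }
  assert (nz2 : nz ^ 2 = inner z z) by apply vnorm_sq.
  set (w := vscal (/ nz) z).
  assert (HTw : T w = vscal (/ nz) (T z)) by apply (proj2 (proj1 HT)).
  assert (HAw : A w = vscal (/ nz) (A z)) by apply (proj2 (proj1 HA)).
  assert (Hinz : 0 < / nz) by (apply Rinv_0_lt_compat; auto).
  assert (Hw1 : vnorm w = 1).
  { unfold w. rewrite vnorm_scal, Rabs_right by lra. change (/ nz * nz = 1). field. lra. }
  assert (Sx : vnorm (T x) ^ 2 = K ^ 2 * vnorm x ^ 2) by (rewrite (proj1 Hx), (proj2 Hx); fold K; ring).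
  assert (Sy : vnorm (T y) ^ 2 = K ^ 2 * vnorm y ^ 2) by (rewrite (proj1 Hy), (proj2 Hy); fold K; ring).
  assert (Sz := subspace T x y (1 - s0) s0 HT Sx Sy). fold z K in Sz. fold nz in Sz.
  assert (Tz : vnorm (T z) = K * nz).
  { apply Rsqr_inj; unfold Rsqr; try nra. apply vnorm_nonneg. }
  assert (MTw : norm_attaining_set T w).
  { split; auto. rewrite HTw, vnorm_scal, Rabs_right, Tz by lra. change (/ nz * (K * nz) = K). field. lra. }
  exists w. split; auto.
  destruct (HM w MTw) as [_ HAw1]. fold a in HAw1. destruct MTw as [_ HTw1]. fold K in HTw1.
  unfold ip_eps_orth. rewrite HTw1, HAw1. fold c.
  assert (Ip : inner (T w) (A w) = - c).
  { rewrite HTw, HAw. iexp. rewrite Hgs0 in Ef.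
    assert (inner (T z) (A z) = - c * nz ^ 2) by (rewrite nz2; lra).
    rewrite H. field. lra. }
  rewrite Ip, Rabs_Ropp, Rabs_right by lra. lra.
Qed.
Theorem mainTheorem5 (H : RealInnerProductSpace) (Hcomplete : is_complete H)
  (Hnontriv : exists x : H, x <> vzero)
  (eps : R) (Heps : 0 <= eps < 1)
  (T A : H -> H) (HT : is_compact_op T) (HA : is_bounded_op A)
  (HM : forall x : H, norm_attaining_set T x -> norm_attaining_set A x) :
  BJ_eps_orth_op eps T A <->
  exists x : H, norm_attaining_set T x /\ ip_eps_orth eps (T x) (A x).
Proof.
  assert (HTb := proj1 HT). split.
  - intro HBJ.
    assert (K0 := opnorm_nonneg T HTb).
    destruct K0 as [HK|HK].
    + destruct (onesided Hcomplete eps 1 T A HT HA (proj1 Heps) HK ltac:(left; reflexivity) HBJ)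
        as [x [Hx1 [HTx Hpx]]].
      destruct (onesided Hcomplete eps (-1) T A HT HA (proj1 Heps) HK ltac:(right; reflexivity) HBJ)
        as [y [Hy1 [HTy Hpy]]].
      assert (Mx : norm_attaining_set T x) by (split; auto).
      assert (My : norm_attaining_set T y) by (split; auto).
      destruct (HM x Mx) as [_ HAx]. destruct (HM y My) as [_ HAy].
      destruct (Rle_lt_dec (- (eps * opnorm T * opnorm A)) (inner (T x) (A x))) as [L1|L1].
      { exists x. split; auto. unfold ip_eps_orth. rewrite HTx, HAx. apply Rabs_le. lra. }
      destruct (Rle_lt_dec (inner (T y) (A y)) (eps * opnorm T * opnorm A)) as [L2|L2].
      { exists y. split; auto. unfold ip_eps_orth. rewrite HTy, HAy. apply Rabs_le. lra. }
      apply (ivt_step eps T A x y (proj1 Heps) HTb HA HM Mx My L1 L2).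
    + destruct Hnontriv as [z Hz].
      assert (Hnz : 0 < vnorm z).
      { destruct (vnorm_nonneg z) as [|E]; auto. exfalso. apply Hz, vnorm_eq0. auto. }
      set (w := vscal (/ vnorm z) z).
      assert (Hw : vnorm w = 1).
      { unfold w. rewrite vnorm_scal, Rabs_right. field. lra.
        left. apply Rinv_0_lt_compat. auto. }
      assert (HTw : vnorm (T w) = 0).
      { assert (B := opnorm_bound T w HTb). rewrite <- HK, Hw in B.
        generalize (vnorm_nonneg (T w)). lra. }
      exists w. split. split; auto. lra.
      unfold ip_eps_orth. rewrite (vnorm_eq0 _ HTw), inner_zero_l, Rabs_R0, vnorm_zero. lra.
  - intros [x [Mx Ho]]. apply (dir_back eps T A x (proj1 Heps) HTb HA Mx); auto.
    apply (proj2 (HM x Mx)).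
Qed.
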